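(* For $n_1=2k_1>0$ and $n_2=2k_2+1>0$, $$s_{n_1+n_2}\bigl[\widetilde L(n_1,n_2)\bigr]=\sum_{j=1}^{n_1}(-1)^j\binom{n_1+n_2}{j}=-\binom{n_1+n_2}{1}+\binom{n_1+n_2}{2}-\cdots-\binom{n_1+n_2}{n_1-1}+\binom{n_1+n_2}{n_1}.$$
   Context: Let $\eta$ be the tautological line bundle over $\mathbb CP^{n_1}$, let $p\colon L(n_1,n_2)=\mathbb CP(\eta\oplus\underline{\mathbb C}^{n_2})\to\mathbb CP^{n_1}$ be the projectivisation and $\gamma$ its tautological line bundle. For $n_1=2k_1$, $n_2=2k_2+1$, $\widetilde L(n_1,n_2)$ denotes the manifold $L(n_1,n_2)$ with the stably complex structure defined by the real bundle isomorphism $$\mathcal TL(n_1,n_2)\oplus\underline{\mathbb R}^4\cong (p^*\bar\eta\oplus p^*\eta)^{\oplus k_1}\oplus p^*\bar\eta\oplus(\bar\gamma\otimes p^*\eta)\oplus(\bar\gamma\oplus\gamma)^{\oplus k_2}\oplus\gamma .$$ Its cohomology ring is $\mathbb Z[u,v]/(u^{n_1+1},v^{n_2+1}-uv^{n_2})$ with $u=c_1(p^*\bar\eta)$, $v=c_1(\bar\gamma)$, $\langle u^{n_1}v^{n_2},[\widetilde L]\rangle=1$. For a stably complex manifold of real dimension $2n$, $s_n[M]=\langle s_n(\mathcal TM),[M]\rangle$ where $s_n$ is the Chern-class polynomial corresponding to the power sum $t_1^n+\cdots+t_n^n$. *)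

(* Defs.v *)
From HB Require Import structures.
From mathcomp Require Import all_boot all_order all_algebra.
Set Implicit Arguments. Unset Strict Implicit. Unset Printing Implicit Defensive.
Import Order.TTheory GRing.Theory Num.Theory.
Local Open Scope ring_scope.

(* Z[u,v] represented as Z[u][v] : polynomials in v with coefficients in Z[u]. *)
Definition Zuv := {poly {poly int}}.
Definition uu : Zuv := ('X : {poly int})%:P.   (* u = c1(p^* bar eta) *)
Definition vv : Zuv := 'X.                     (* v = c1(bar gamma)    *)

(* H^*(L) = Z[u,v]/(u^(n1+1), v^(n2+1) - u v^n2)
          = (Z[u]/(u^(n1+1)))[v] / (v^n2 (v - u)).
   Normal form: remainder modulo the monic (in v) polynomial v^(n2+1) - u v^n2,
   then coefficients taken modulo u^(n1+1).  The evaluation on the fundamental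
   class, <., [L]>, is the coefficient of u^n1 v^n2 in this normal form
   (normalised by <u^n1 v^n2,[L]> = 1). *)
Definition L_rel (n2 : nat) : Zuv := vv ^+ n2.+1 - uu * vv ^+ n2.
Definition L_normal (n1 n2 : nat) (x : Zuv) : Zuv :=
  map_poly (fun c : {poly int} => Pdiv.Ring.rmodp c ('X ^+ n1.+1))
           (Pdiv.Ring.rmodp x (L_rel n2)).
Definition L_eval (n1 n2 : nat) (x : Zuv) : int :=
  ((L_normal n1 n2 x)`_n2)`_n1.

(* First Chern classes of the complex line bundles in the splitting
   T L (+) R^4 = (p^*bar eta (+) p^*eta)^k1 (+) p^*bar eta (+) (bar gamma (x) p^* eta)
                 (+) (bar gamma (+) gamma)^k2 (+) gamma.
   c1(p^* eta) = -u, c1(gamma) = -v, c1(bar gamma (x) p^* eta) = v - u. *)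
Definition Ltilde_chern_roots (k1 k2 : nat) : seq Zuv :=
  flatten (nseq k1 [:: uu; - uu]) ++ [:: uu; vv - uu]
  ++ flatten (nseq k2 [:: vv; - vv]) ++ [:: - vv].

(* s_n of a sum of line bundles (plus trivial bundles) is the power sum of
   their first Chern classes. *)
Definition s_class (n : nat) (roots : seq Zuv) : Zuv :=
  \sum_(x <- roots) x ^+ n.

Definition s_number_Ltilde (k1 k2 : nat) : int :=
  L_eval k1.*2 k2.*2.+1
    (s_class (k1.*2 + k2.*2.+1) (Ltilde_chern_roots k1 k2)).

(* Main.v *)
Require Import Defs.
From HB Require Import structures.
From mathcomp Require Import all_boot all_order all_algebra.
From mathcomp Require Import ring zify.
Import Order.TTheory GRing.Theory Num.Theory.
Local Open Scope ring_scope.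

Section S.
Variables n1 n2 : nat.

Lemma Lrel_eq : L_rel n2 = 'X^n2 * ('X - uu).
Proof. by rewrite /L_rel /vv mulrBr -exprSr mulrC. Qed.

Lemma Lrel_size : size (L_rel n2) = n2.+2.
Proof.
rewrite Lrel_eq size_Mmonic ?monicXsubC ?size_polyXn /uu ?size_XsubC ?addn2 //.
by rewrite monic_neq0 // monicXn.
Qed.

Lemma Lrel_monic : L_rel n2 \is monic.
Proof.
rewrite Lrel_eq.
by rewrite monicMl ?monicXn // /uu monicXsubC.
Qed.

Lemma rmodX_coef (p : {poly int}) : (Pdiv.Ring.rmodp p ('X ^+ n1.+1))`_n1 = p`_n1.
Proof.
have m : ('X ^+ n1.+1 : {poly int}) \is monic by apply: monicXn.
rewrite {2}(Pdiv.RingMonic.rdivp_eq m p) coefD coefMXn ltnSn add0r //.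
Qed.

Definition e (x : Zuv) := ((Pdiv.Ring.rmodp x (L_rel n2))`_n2)`_n1.

Lemma eE x : L_eval n1 n2 x = e x.
Proof.
by rewrite /L_eval /L_normal coef_map_id0 ?rmodX_coef // Pdiv.Ring.rmod0p.
Qed.

Lemma eD x y : e (x + y) = e x + e y.
Proof. by rewrite /e (Pdiv.RingMonic.rmodpD Lrel_monic) !coefD. Qed.

Lemma eN x : e (- x) = - e x.
Proof. by rewrite /e (Pdiv.RingMonic.rmodpN Lrel_monic) !coefN. Qed.

Lemma eMn x k : e (x *+ k) = e x *+ k.
Proof.
elim: k => [|k IH]; first by rewrite !mulr0n /e Pdiv.Ring.rmod0p !coef0.
by rewrite !mulrS eD IH.
Qed.

Lemma eML q : e (q * L_rel n2) = 0.
Proof. by rewrite /e (Pdiv.RingMonic.rmodp_mull Lrel_monic) !coef0. Qed.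

Lemma e_small a b : (b <= n2)%N ->
  e (uu ^+ a * vv ^+ b) = ((n1 == a) && (n2 == b))%:R.
Proof.
move=> hb.
rewrite /e Pdiv.Ring.rmodp_small; last first.
  rewrite /uu /vv -rmorphXn /= size_Cmul ?size_polyXn; last first.
    by rewrite expf_neq0 // polyX_eq0.
  by rewrite Lrel_size ltnS.
rewrite /uu /vv -rmorphXn coefCM coefXn.
by case: (n2 == b); rewrite ?mulr1 ?mulr0 ?coef0 ?coefXn ?andbT ?andbF.
Qed.

Lemma e_shift a k : e (uu ^+ a * vv ^+ (n2 + k.+1)) = e (uu ^+ a.+1 * vv ^+ (n2 + k)).
Proof.
have -> : uu ^+ a * vv ^+ (n2 + k.+1) =
   (uu ^+ a * vv ^+ k) * L_rel n2 + uu ^+ a.+1 * vv ^+ (n2 + k).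
  rewrite /L_rel !exprD !exprS; ring.
by rewrite eD eML add0r.
Qed.

Lemma e_big k a : e (uu ^+ a * vv ^+ (n2 + k)) = (a + k == n1)%N%:R.
Proof.
elim: k a => [|k IH] a.
  rewrite e_small ?addn0 // eqxx andbT; congr (_%:R); apply/eqP/eqP; lia.
by rewrite e_shift IH; congr (_%:R); apply/eqP/eqP; lia.
Qed.

Lemma e_mono a b : e (uu ^+ a * vv ^+ b) = ((n2 <= b)%N && (a + b == n1 + n2)%N)%:R.
Proof.
case: (leqP n2 b) => hb /=.
  rewrite -(subnKC hb) e_big; congr (_%:R); apply/eqP/eqP; lia.
by rewrite e_small ?(ltnW hb) // (gtn_eqF hb) andbF.
Qed.
End S.

Lemma flat_sum (N k : nat) (x : Zuv) : odd N ->
  \sum_(y <- flatten (nseq k [:: x; - x])) y ^+ N = 0.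
Proof.
move=> oN; elim: k => [|k IH] /=; first by rewrite big_nil.
by rewrite !big_cons IH addr0 exprNn -signr_odd oN expr1 mulN1r addrN.
Qed.

Lemma e0 n1 n2 : e n1 n2 0 = 0.
Proof. by rewrite /e Pdiv.Ring.rmod0p !coef0. Qed.

Lemma e_sign n1 n2 i x : e n1 n2 ((-1) ^+ i * x) = (-1) ^+ i * e n1 n2 x.
Proof. by rewrite -signr_odd -[in RHS]signr_odd; case: (odd i); rewrite ?expr1 ?expr0 ?mulN1r ?mul1r // eN. Qed.

Theorem lemma10p1 (k1 k2 n1 n2 : nat) :
  n1 = k1.*2 -> n2 = k2.*2.+1 -> (0 < n1)%N ->
  s_number_Ltilde k1 k2 =
    \sum_(1 <= j < n1.+1) (-1) ^+ j * ('C(n1 + n2, j))%:Z.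
Proof.
move=> h1 h2 hpos.
have oN : odd (k1.*2 + k2.*2.+1) by rewrite oddD odd_double /= odd_double.
rewrite /s_number_Ltilde eE /s_class /Ltilde_chern_roots !big_cat /= !flat_sum //.
rewrite !big_cons !big_nil !add0r !addr0 -h1 -h2.
have hn2 : (0 < n2)%N by rewrite h2.
rewrite -h1 -h2 in oN. clear h1 h2.
set N := (n1 + n2)%N.
have eu : e n1 n2 (uu ^+ N) = 0.
  by rewrite -[uu ^+ N]mulr1 -(expr0 vv) e_mono leqNgt hn2.
have ev : e n1 n2 (vv ^+ N) = 1.
  by rewrite -[vv ^+ N]mul1r -(expr0 uu) e_mono /N leq_addl add0n eqxx.
rewrite !eD exprNn e_sign eu ev add0r exprBn (big_morph _ (eD n1 n2) (e0 n1 n2)).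
rewrite -signr_odd oN expr1 mulr1.
under eq_bigr => i _ do rewrite eMn -mulrA e_sign [vv ^+ _ * _]mulrC e_mono.
rewrite -(big_mkord xpredT (fun i => (-1) ^+ i * ((n2 <= N - i)%N && (i + (N - i) == n1 + n2)%N)%:R *+ 'C(N, i))).
rewrite [X in X - 1](@big_cat_nat _ _ _ n1.+1 0 N.+1) /=; last (by rewrite /N; lia); last by [].
rewrite [X in _ + X + _]big1_seq ?addr0; last first.
  move=> i; rewrite /= mem_index_iota => /andP [hi _].
  by rewrite leqNgt (_ : (N - i < n2)%N) ?mulr0 ?mul0rn //; rewrite /N; lia.
rewrite big_ltn // expr0 mul1r subn0 leq_addl add0n eqxx /= bin0 mulr1n addrAC subrr add0r.
apply: eq_big_nat => i /andP [hi1 hi2].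
have h3 : (n2 <= N - i)%N by rewrite /N; lia.
have h4 : (i <= N)%N by rewrite /N; lia.
by rewrite h3 /= subnKC // eqxx mulr1 -mulr_natr -natz.
Qed.
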